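(* Let $p\in(0,1)$, $N=1/(1-p)$, $r\ge0$ an integer and $n\ge0$ even. If $G=(U,w,w')$ is a melonic graph of order $n$, then $$\frac{1}{(2n+1)^n}\,p^{(2n+1)r}\le \mathcal A_r(G).$$
   Context: Trees. A 2-rooted ternary tree of order $n$ is a finite plane tree $U$ with a root vertex of degree 2 and $n$ true vertices of degree 4; each edge is internal or a leaf (half-edge). Each true vertex $v$ has parent edge $e_1(v)$ (towards the root) and ordered children edges $e_2(v),e_3(v),e_4(v)$. One root edge has type $\alpha$, the other $\bar\alpha$; if $e_1(v)$ has type $\tau$ then $e_2(v)$ has the other type and $e_3(v),e_4(v)$ have type $\tau$. Leaves of type $\alpha$ are leaves, of type $\bar\alpha$ anti-leaves ($n+1$ each). A heap-ordering labels true vertices bijectively by $\{1,\dots,n\}$, increasing from parent to child. Graphs. For even $n$, a graph of order $n$ is $G=(U,w,w')$: $U$ heap-ordered; $w$ a bijection leaves $\to$ anti-leaves (dashed edges; internal edges are solid); $w'$ a partition of true vertices into $n/2$ pairs (wavy edges) with, for each pair $\{v,v'\}$ ($v$ of smaller label), one of eight propagators in $(S,j,k)=(S_v,j_v,k_v)$, $(S',j',k')=(S_{v'},j_{v'},k_{v'})$: $\delta_{jj'}\delta_{kk'}$, $\delta_{j,S-j'}\delta_{kk'}$, $\delta_{jj'}\delta_{k,S-k'}$, $\delta_{j,S-j'}\delta_{k,S-k'}$, $\delta_{jk'}\delta_{kj'}$, $\delta_{j,S-k'}\delta_{kj'}$, $\delta_{jk'}\delta_{k,S-j'}$, $\delta_{j,S-k'}\delta_{k,S-j'}$,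 together with $S=S'$. Amplitude. A momentum attribution gives each true vertex $S_v\ge0$, $0\le j_v,k_v\le S_v$ and momenta $j_v,S_v-j_v,k_v,S_v-k_v$ to the ends at $v$ of $e_1,\dots,e_4$. It is admissible (for root momentum $r$) if solid edges get equal momenta at both ends, both root edges carry momentum $r$, every dashed edge $e$ joins leaves of equal momentum $m(e)$, and every wavy edge satisfies $S_v=S_{v'}$ and its propagator. $\mathcal A_r(G):=N^{-n}\sum_{\text{admissible}}\prod_{e\text{ dashed}}p^{m(e)}$. Melonic graphs. Each propagator (with $S=S'$) induces a bijection from the edge-ends at $v$ to those at $v'$ (matching identified momenta). For two true vertices joined by three edges, the leading propagator is the one whose bijection maps the $v$-end of each joining edge to its $v'$-end. The trivial graph ($n=0$) is the root with a leaf and an anti-leaf joined by a dashed edge. A graph is melonic if (ignoring heap-orderings) it arises from the trivial graph by repeatedly inserting two new true vertices $v,v'$, joined to each other by three edges and by a wavy edge carrying the leading propagator, in one of these ways: (I) into a dashed edge $\{x,y\}$: $e_1(v)$ at $x$, $e_1(v')$ at $y$, dashed edges $e_2(v)$–$e_2(v')$ and $\{e_3(v),e_4(v)\}$ bijectively to $\{e_3(v'),e_4(v')\}$; (II) into a dashed edge $\{z,z'\}$: $e_1(v)$ at $z$, $e_1(v')=e_2(v)$, dashed edges $e_2(v')$–$z'$ and $\{e_3(v),e_4(v)\}$ bijectively to $\{e_3(v'),e_4(v')\}$; (III) into a dashed edge $\{z,z'\}$: $e_1(v)$ at $z$, $e_1(v')=e_a(v)$ ($a\in\{3,4\}$, $b$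 the other), dashed edges $e_2(v)$–(one of $e_3(v'),e_4(v')$), $e_b(v)$–$e_2(v')$, remaining child leaf of $v'$–$z'$; (IIs) into a solid edge from $u$ to child $z$: $v$ below $u$, $e_1(v')=e_2(v)$, $e_1(z)=e_2(v')$, dashed edges $\{e_3(v),e_4(v)\}$ bijectively to $\{e_3(v'),e_4(v')\}$; (IIIs) as (IIs) but $e_1(v')=e_a(v)$, $a\in\{3,4\}$, $e_1(z)=e_c(v')$, $c\in\{3,4\}$, dashed edges $e_2(v)$–(other of $e_3(v'),e_4(v')$) and $e_b(v)$–$e_2(v')$. *)

(* Defs.v *)
From HB Require Import structures.
From mathcomp Require Import all_boot all_order all_algebra.
From mathcomp Require Import all_classical all_reals.
From mathcomp Require Import fingroup perm.
From mathcomp Require Import ereal esum.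

Set Implicit Arguments.
Unset Strict Implicit.
Unset Printing Implicit Defensive.
Import Order.TTheory GRing.Theory Num.Theory.

(* Slots (edge positions hanging below a vertex).                            *)
(* A tree of order n has true vertices 'I_n.  Below the root there are two   *)
(* slots: [inl true] (the root edge of type alpha) and [inl false] (the root *)
(* edge of type alpha-bar).  Below the true vertex u there are three slots   *)
(* [inr (u, c)], c : 'I_3, standing for the children edges e_{c+2}(u).       *)
(* A slot is either occupied by a true vertex (then the edge is internal =   *)
(* solid) or it is a leaf (a half-edge).                                     *)
Definition slot (n : nat) : finType := (bool + 'I_n * 'I_3)%type.

Definition rootA {n} : slot n := inl true.
Definition rootB {n} : slot n := inl false.
Definition kid {n} (u : 'I_n) (c : 'I_3) : slot n := inr (u, c).

(* Graph data (possibly not heap ordered, used for melonic constructions).   *)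
(*  par v  : the slot in which the true vertex v hangs, i.e. the lower end of *)
(*           its parent edge e_1(v);                                         *)
(*  dsh    : the dashed edges, as an involution on leaf slots (its values on *)
(*           non-leaf slots are irrelevant);                                 *)
(*  mate   : the wavy edges, as a fixed-point-free involution on vertices;   *)
(*  prop v : the propagator of the wavy edge at v, read with v in the role of*)
(*           the unprimed vertex (S,j,k); see [prop_holds].                  *)
Record pregraph (n : nat) := PreGraph {
  par  : 'I_n -> slot n;
  dsh  : slot n -> slot n;
  mate : 'I_n -> 'I_n;
  prop : 'I_n -> 'I_8 }.

Definition leaf {n} (G : pregraph n) (s : slot n) : bool :=
  [forall v, par G v != s].

(* Edge types: true = alpha, false = alpha-bar.  The type of the edge in slot *)
(* [kid u c] is the type of e_1(u), flipped iff c = 0 (i.e. the edge is e_2). *)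
(* Computed with fuel; fuel n is enough for any tree with n true vertices.   *)
Fixpoint sty_aux {n} (pr : 'I_n -> slot n) (k : nat) (s : slot n) : bool :=
  match s with
  | inl b => b
  | inr (u, c) =>
      match k with
      | 0 => true
      | k'.+1 => addb (c == ord0) (sty_aux pr k' (pr u))
      end
  end.

Definition sty {n} (G : pregraph n) (s : slot n) : bool := sty_aux (par G) n s.

(* The eight propagators, numbered 0..7 in the order of the paper:           *)
Definition prop_holds (t : 'I_8) (S j k S' j' k' : nat) : bool :=
  (S == S') &&
  match val t with
  | 0 => (j == j') && (k == k')
  | 1 => (j == S - j') && (k == k')
  | 2 => (j == j') && (k == S - k')
  | 3 => (j == S - j') && (k == S - k')
  | 4 => (j == k') && (k == j')
  | 5 => (j == S - k') && (k == j')
  | 6 => (j == k') && (k == S - j')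
  | _ => (j == S - k') && (k == S - j')
  end.

(* The same propagator seen from the other vertex (exchanging the roles of   *)
(* (S,j,k) and (S',j',k')): 5 and 6 are exchanged, the others are fixed.     *)
Definition ptrans (t : 'I_8) : 'I_8 :=
  if val t == 5 then inord 6 else if val t == 6 then inord 5 else t.

(* The bijection induced by a propagator from the edge-ends e_1..e_4 at v    *)
(* (numbered 0..3) to the edge-ends at v' (matching identified momenta).     *)
Definition pbij_table (t : 'I_8) : seq nat :=
  match val t with
  | 0 => [:: 0; 1; 2; 3]
  | 1 => [:: 1; 0; 2; 3]
  | 2 => [:: 0; 1; 3; 2]
  | 3 => [:: 1; 0; 3; 2]
  | 4 => [:: 2; 3; 0; 1]
  | 5 => [:: 3; 2; 0; 1]
  | 6 => [:: 2; 3; 1; 0]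
  | _ => [:: 3; 2; 1; 0]
  end.
Definition pbij (t : 'I_8) (e : nat) : nat := nth 0 (pbij_table t) e.

(* t is the leading propagator for the joining edges whose ends are listed   *)
(* as pairs (end index at v, end index at v').                               *)
Definition leading (t : 'I_8) (ends : seq (nat * nat)) : bool :=
  all (fun e => pbij t e.1 == e.2) ends.

Definition is_graph {n} (G : pregraph n) : Prop :=
  [/\ injective (par G),
      (forall v (u : 'I_n) (c : 'I_3), par G v = kid u c -> u < v),
      (forall s, leaf G s ->
         [/\ leaf G (dsh G s), dsh G (dsh G s) = s
           & sty G (dsh G s) = ~~ sty G s]),
      (forall v, mate G v != v /\ mate G (mate G v) = v)
    & (forall v, prop G (mate G v) = ptrans (prop G v))].

Definition attribution (n : nat) := {ffun 'I_n -> nat * nat * nat}.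

Section Momenta.
Context {n : nat} (a : attribution n).
Definition aS v := (a v).1.1.
Definition aj v := (a v).1.2.
Definition ak v := (a v).2.
(* momentum of the end at v of e_{e+1}(v), e = 0..3 *)
Definition endmom (v : 'I_n) (e : nat) : nat :=
  match e with
  | 0 => aj v
  | 1 => aS v - aj v
  | 2 => ak v
  | _ => aS v - ak v
  end.
(* momentum of the edge in a slot, seen at its upper end (root momentum r    *)
(* for the root edges)                                                       *)
Definition slot_mom (r : nat) (s : slot n) : nat :=
  match s with
  | inl _ => r
  | inr (u, c) => endmom u (val c).+1
  end.
End Momenta.

Definition admissible {n} (G : pregraph n) (r : nat) (a : attribution n) : Prop :=
  [/\ (forall v, aj a v <= aS a v /\ ak a v <= aS a v),
      (* solid edges have equal momenta at both ends; root edges carry r *)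
      (forall v, slot_mom a r (par G v) = aj a v),
      (forall s, leaf G s -> slot_mom a r (dsh G s) = slot_mom a r s)
    &
      (forall v, aS a (mate G v) = aS a v /\
         (v < mate G v -> prop_holds (prop G v) (aS a v) (aj a v) (ak a v)
                  (aS a (mate G v)) (aj a (mate G v)) (ak a (mate G v))))].

Local Open Scope ring_scope.

(* product over dashed edges of p^{m(e)}: each dashed edge contains exactly  *)
(* one leaf of type alpha.                                                   *)
Definition weight {R : realType} {n} (G : pregraph n) (p : R) (r : nat)
  (a : attribution n) : R :=
  \prod_(s : slot n | leaf G s && sty G s) p ^+ slot_mom a r s.

Definition amplitude {R : realType} {n} (G : pregraph n) (p : R) (r : nat)
  : \bar R :=
  (((1 - p)^-1) ^- n)%:E *
    \esum_(a in [set a : attribution n | admissible G r a]) (weight G p r a)%:E.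

Definition oldv {n} (u : 'I_n) : 'I_n.+2 := widen_ord (leqW (leqnSn n)) u.
Definition oslot {n} (s : slot n) : slot n.+2 :=
  match s with inl b => inl b | inr (u, c) => inr (oldv u, c) end.
Definition nv {n} : 'I_n.+2 := inord n.
Definition nv' {n} : 'I_n.+2 := inord n.+1.

Definition c1 : 'I_3 := inord 1.
Definition c2 : 'I_3 := inord 2.
Definition cother (c : 'I_3) : 'I_3 := if c == c1 then c2 else c1.

Definition ins_common {n} (G : pregraph n) (H : pregraph n.+2)
   (moved : 'I_n -> bool) (t : 'I_8) (ends : seq (nat * nat)) : Prop :=
  [/\ (forall u, ~~ moved u -> par H (oldv u) = oslot (par G u)),
      [/\ (forall u, mate H (oldv u) = oldv (mate G u)),
          mate H nv = nv' & mate H nv' = nv],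
      (forall u, prop H (oldv u) = prop G u),
      prop H nv = t /\ prop H nv' = ptrans t
    & leading t ends].

Definition dpair {n} (H : pregraph n) (s s' : slot n) : Prop :=
  dsh H s = s' /\ dsh H s' = s.

(* (I) insertion into the dashed edge {x, y}, y = dsh G x *)
Definition ins_I {n} (G : pregraph n) (H : pregraph n.+2) : Prop :=
  exists x (ca : 'I_3) t, leaf G x /\ (ca == c1 \/ ca == c2) /\
  let y := dsh G x in
  let cb := cother ca in
  [/\ ins_common G H (fun _ => false) t
        [:: (1, 1); (2, (val ca).+1); (3, (val cb).+1)],
      par H nv = oslot x /\ par H nv' = oslot y,
      (forall s, leaf G s -> s <> x -> s <> y -> dsh H (oslot s) = oslot (dsh G s)),
      dpair H (kid nv ord0) (kid nv' ord0)
    & dpair H (kid nv c1) (kid nv' ca) /\ dpair H (kid nv c2) (kid nv' cb)].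

(* (II) insertion into the dashed edge {z, z'}, z' = dsh G z *)
Definition ins_II {n} (G : pregraph n) (H : pregraph n.+2) : Prop :=
  exists z (ca : 'I_3) t, leaf G z /\ (ca == c1 \/ ca == c2) /\
  let z' := dsh G z in
  let cb := cother ca in
  [/\ ins_common G H (fun _ => false) t
        [:: (1, 0); (2, (val ca).+1); (3, (val cb).+1)],
      par H nv = oslot z /\ par H nv' = kid nv ord0,
      (forall s, leaf G s -> s <> z -> s <> z' -> dsh H (oslot s) = oslot (dsh G s)),
      dpair H (kid nv' ord0) (oslot z')
    & dpair H (kid nv c1) (kid nv' ca) /\ dpair H (kid nv c2) (kid nv' cb)].

(* (III) insertion into the dashed edge {z, z'}, z' = dsh G z;               *)
(* e_1(v') = e_a(v) (child index ca), e_2(v) -- e_x(v') (child index cx).     *)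
Definition ins_III {n} (G : pregraph n) (H : pregraph n.+2) : Prop :=
  exists z (ca cx : 'I_3) t, leaf G z /\ (ca == c1 \/ ca == c2) /\
  (cx == c1 \/ cx == c2) /\
  let z' := dsh G z in
  let cb := cother ca in
  let cy := cother cx in
  [/\ ins_common G H (fun _ => false) t
        [:: ((val ca).+1, 0); (1, (val cx).+1); ((val cb).+1, 1)],
      par H nv = oslot z /\ par H nv' = kid nv ca,
      (forall s, leaf G s -> s <> z -> s <> z' -> dsh H (oslot s) = oslot (dsh G s)),
      dpair H (kid nv ord0) (kid nv' cx)
    & dpair H (kid nv cb) (kid nv' ord0) /\ dpair H (kid nv' cy) (oslot z')].

(* (IIs) insertion into the solid edge above the true vertex z *)
Definition ins_IIs {n} (G : pregraph n) (H : pregraph n.+2) : Prop :=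
  exists (z : 'I_n) (ca : 'I_3) t, (ca == c1 \/ ca == c2) /\
  let cb := cother ca in
  [/\ ins_common G H (fun u => u == z) t
        [:: (1, 0); (2, (val ca).+1); (3, (val cb).+1)],
      par H nv = oslot (par G z) /\ par H nv' = kid nv ord0,
      par H (oldv z) = kid nv' ord0,
      (forall s, leaf G s -> dsh H (oslot s) = oslot (dsh G s))
    & dpair H (kid nv c1) (kid nv' ca) /\ dpair H (kid nv c2) (kid nv' cb)].

(* (IIIs) insertion into the solid edge above the true vertex z;             *)
(* e_1(v') = e_a(v) (child index ca), e_1(z) = e_c(v') (child index cc).      *)
Definition ins_IIIs {n} (G : pregraph n) (H : pregraph n.+2) : Prop :=
  exists (z : 'I_n) (ca cc : 'I_3) t, (ca == c1 \/ ca == c2) /\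
  (cc == c1 \/ cc == c2) /\
  let cb := cother ca in
  let cd := cother cc in
  [/\ ins_common G H (fun u => u == z) t
        [:: ((val ca).+1, 0); (1, (val cd).+1); ((val cb).+1, 1)],
      par H nv = oslot (par G z) /\ par H nv' = kid nv ca,
      par H (oldv z) = kid nv' cc,
      (forall s, leaf G s -> dsh H (oslot s) = oslot (dsh G s))
    & dpair H (kid nv ord0) (kid nv' cd) /\ dpair H (kid nv cb) (kid nv' ord0)].

(* relabelling of the true vertices (isomorphism ignoring heap-orderings) *)
Definition sslot {n} (f : 'I_n -> 'I_n) (s : slot n) : slot n :=
  match s with inl b => inl b | inr (u, c) => inr (f u, c) end.

Definition iso {n} (sg : {perm 'I_n}) (G H : pregraph n) : Prop :=
  [/\ (forall v, par H (sg v) = sslot sg (par G v)),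
      (forall s, leaf G s -> dsh H (sslot sg s) = sslot sg (dsh G s)),
      (forall v, mate H (sg v) = sg (mate G v))
    & (forall v, prop H (sg v) = prop G v)].

Inductive melonic : forall n, pregraph n -> Prop :=
| mel_triv (G : pregraph 0) :
    dsh G rootA = rootB -> dsh G rootB = rootA -> melonic G
| mel_iso n (G H : pregraph n) (sg : {perm 'I_n}) :
    melonic G -> iso sg G H -> melonic H
| mel_I n (G : pregraph n) (H : pregraph n.+2) : melonic G -> ins_I G H -> melonic H
| mel_II n (G : pregraph n) (H : pregraph n.+2) : melonic G -> ins_II G H -> melonic H
| mel_III n (G : pregraph n) (H : pregraph n.+2) : melonic G -> ins_III G H -> melonic H
| mel_IIs n (G : pregraph n) (H : pregraph n.+2) : melonic G -> ins_IIs G H -> melonic H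
| mel_IIIs n (G : pregraph n) (H : pregraph n.+2) : melonic G -> ins_IIIs G H -> melonic H.

(* Main.v *)
Require Import Defs.
From HB Require Import structures.
From mathcomp Require Import all_boot all_order all_algebra.
From mathcomp Require Import all_classical all_reals.
From mathcomp Require Import ereal esum.
Import Order.TTheory GRing.Theory Num.Theory.
Local Open Scope ring_scope.

From mathcomp Require Import fingroup perm.
From mathcomp Require Import zify ring lra.
Local Close Scope ring_scope.

Set Implicit Arguments.
Unset Strict Implicit.
Unset Printing Implicit Defensive.


Definition pmate (t : 'I_8) (x : nat * nat * nat) : nat * nat * nat :=
  let: (s, j, k) := x in
  match val t with
  | 0 => (s, j, k) | 1 => (s, s - j, k) | 2 => (s, j, s - k) | 3 => (s, s - j, s - k)
  | 4 => (s, k, j) | 5 => (s, k, s - j) | 6 => (s, s - k, j) | _ => (s, s - k, s - j)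
  end.

Definition em (x : nat * nat * nat) (e : nat) : nat :=
  match e with 0 => x.1.2 | 1 => x.1.1 - x.1.2 | 2 => x.2 | _ => x.1.1 - x.2 end.

Definition bnd (x : nat * nat * nat) := x.1.2 <= x.1.1 /\ x.2 <= x.1.1.

Lemma t8 (t : 'I_8) : val t = 0 \/ val t = 1 \/ val t = 2 \/ val t = 3 \/
  val t = 4 \/ val t = 5 \/ val t = 6 \/ val t = 7.
Proof. case: t => [[|[|[|[|[|[|[|[|]]]]]]]] //= _]; tauto. Qed.

Lemma pmate_bnd t x : bnd x -> bnd (pmate t x).
Proof.
case: x => [[s j] k]; rewrite /bnd /pmate /=.
by case: (t8 t) => [->|[->|[->|[->|[->|[->|[->|->]]]]]]]; rewrite /=; lia.
Qed.

Lemma pmate_S t x : (pmate t x).1.1 = x.1.1.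
Proof. by case: x => [[s j] k]; rewrite /pmate; case: (t8 t) => [->|[->|[->|[->|[->|[->|[->|->]]]]]]]. Qed.

Lemma ph1 t x : bnd x -> prop_holds t x.1.1 x.1.2 x.2
  (pmate t x).1.1 (pmate t x).1.2 (pmate t x).2.
Proof.
case: x => [[s j] k]; rewrite /bnd /pmate /prop_holds /=.
by case: (t8 t) => [->|[->|[->|[->|[->|[->|[->|->]]]]]]] /= [h1 h2]; rewrite ?eqxx /=; repeat (apply/andP; split); apply/eqP; lia.
Qed.

Lemma ph2 t x : bnd x -> prop_holds (ptrans t) 
  (pmate t x).1.1 (pmate t x).1.2 (pmate t x).2 x.1.1 x.1.2 x.2.
Proof.
case: x => [[s j] k]; rewrite /bnd /pmate /prop_holds /ptrans /=.
case: t => [[|[|[|[|[|[|[|[|?]]]]]]]] ht] //= [h1 h2]; rewrite ?inordK //= ?eqxx /=;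
  repeat (apply/andP; split); apply/eqP; lia.
Qed.

Lemma em_pb t x e : bnd x -> e < 4 -> em (pmate t x) (pbij t e) = em x e.
Proof.
case: x => [[s j] k]; rewrite /bnd /pmate /pbij /pbij_table /=.
case: e => [|[|[|[|e]]]] //= [h1 h2] _; by case: (t8 t) => [->|[->|[->|[->|[->|[->|[->|->]]]]]]] /=; lia.
Qed.

Lemma pbij_sum t : pbij t 0 + pbij t 1 + pbij t 2 + pbij t 3 = 6.
Proof. by rewrite /pbij /pbij_table; case: (t8 t) => [->|[->|[->|[->|[->|[->|[->|->]]]]]]]. Qed.

Lemma val_c1 : nat_of_ord c1 = 1. Proof. by rewrite /c1 inordK. Qed.
Lemma val_c2 : nat_of_ord c2 = 2. Proof. by rewrite /c2 inordK. Qed.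
Lemma cother_c1 : cother c1 = c2. Proof. by rewrite /cother eqxx. Qed.
Lemma cother_c2 : cother c2 = c1. 
Proof. rewrite /cother ifN //; apply/negP => /eqP/(congr1 (@nat_of_ord 3)); by rewrite val_c1 val_c2. Qed.

Lemma c3 (c : 'I_3) : [\/ c = ord0, c = c1 | c = c2].
Proof.
case: c => [[|[|[|]]] //= h].
- by constructor 1; apply: ord_inj.
- by constructor 2; apply: ord_inj; rewrite val_c1.
- by constructor 3; apply: ord_inj; rewrite val_c2.
Qed.


Definition ext {n} (aG : attribution n) (xv : nat * nat * nat) (t : 'I_8)
  : attribution n.+2 :=
  [ffun w : 'I_n.+2 => match (insub (nat_of_ord w) : option 'I_n) with
     | Some u => aG u | None => if nat_of_ord w == n then xv else pmate t xv end].

Lemma val_nv n : nat_of_ord (@nv n) = n. Proof. by rewrite /nv inordK. Qed.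
Lemma val_nv' n : nat_of_ord (@nv' n) = n.+1. Proof. by rewrite /nv' inordK. Qed.
Lemma val_oldv n (u : 'I_n) : nat_of_ord (oldv u) = u. Proof. by []. Qed.

Lemma ext_old n (aG : attribution n) xv t u : ext aG xv t (oldv u) = aG u.
Proof. by rewrite /ext ffunE val_oldv valK. Qed.
Lemma ext_nv n (aG : attribution n) xv t : ext aG xv t nv = xv.
Proof. by rewrite /ext ffunE val_nv insubF ?ltnn // eqxx. Qed.
Lemma ext_nv' n (aG : attribution n) xv t : ext aG xv t nv' = pmate t xv.
Proof. by rewrite /ext ffunE val_nv' insubF ?ltnn ?ltnNge ?leqnSn //= ifN // neq_ltn ltnSn orbT. Qed.

Lemma vdec n (w : 'I_n.+2) : (exists u, w = oldv u) \/ w = nv \/ w = nv'.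
Proof.
case: (ltnP w n) => h.
  by left; exists (Ordinal h); apply: ord_inj.
have := ltn_ord w; rewrite ltnS leq_eqVlt => /orP[/eqP e|].
  by right; right; apply: ord_inj; rewrite val_nv' e.
rewrite ltnS => h2; right; left; apply: ord_inj; rewrite val_nv; apply/eqP; by rewrite eqn_leq h h2.
Qed.

Lemma oldv_inj n : injective (@oldv n).
Proof. by move=> u v /(congr1 (@nat_of_ord _)) /= e; apply: ord_inj. Qed.
Lemma oldv_nv n (u : 'I_n) : oldv u <> nv.
Proof. by move/(congr1 (@nat_of_ord _)); rewrite val_nv val_oldv => e; move: (ltn_ord u); rewrite e ltnn. Qed.
Lemma oldv_nv' n (u : 'I_n) : oldv u <> nv'.
Proof. by move/(congr1 (@nat_of_ord _)); rewrite val_nv' val_oldv => e; move: (ltn_ord u); rewrite e ltnNge leqnSn. Qed.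
Lemma nv_nv' n : (@nv n) <> nv'.
Proof. by move/(congr1 (@nat_of_ord _)); rewrite val_nv val_nv' => /n_Sn. Qed.

Lemma sdec n (s : slot n.+2) :
  (exists s0, s = oslot s0) \/ (exists c, s = kid nv c) \/ (exists c, s = kid nv' c).
Proof.
case: s => [b|[w c]]; first by left; exists (inl b).
case: (vdec w) => [[u ->]|[->|->]].
- by left; exists (inr (u, c)).
- by right; left; exists c.
- by right; right; exists c.
Qed.

Lemma oslot_inj n : injective (@oslot n).
Proof.
case=> [b|[u c]] [b'|[u' c']] //=; first by case=> ->.
by case=> /ord_inj -> ->.
Qed.
Lemma oslot_kid_nv n (s : slot n) c : oslot s <> kid nv c.
Proof. by case: s => [b|[u c']] //= [] /oldv_nv. Qed.
Lemma oslot_kid_nv' n (s : slot n) c : oslot s <> kid nv' c.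
Proof. by case: s => [b|[u c']] //= [] /oldv_nv'. Qed.
Lemma kid_inj n (u v : 'I_n) c d : kid u c = kid v d -> u = v /\ c = d.
Proof. by case. Qed.

Lemma endmomE n (a : attribution n) v e : endmom a v e = em (a v) e.
Proof. by case: e => [|[|[|e]]]. Qed.

Lemma mom_kid n (a : attribution n) r u c : slot_mom a r (kid u c) = em (a u) (nat_of_ord c).+1.
Proof. by rewrite -endmomE. Qed.

Lemma mom_old n (aG : attribution n) xv t r s :
  slot_mom (ext aG xv t) r (oslot s) = slot_mom aG r s.
Proof. case: s => [b|[u c]] //; rewrite /oslot -/(kid (oldv u) c) -/(kid u c) !mom_kid ext_old //. Qed.

Lemma leaf_par n (G : pregraph n) v : leaf G (par G v) = false.
Proof. by apply/negP => /forallP /(_ v); rewrite eqxx. Qed.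

Lemma leafP n (G : pregraph n) s : leaf G s <-> forall v, par G v <> s.
Proof.
split; first by move=> /forallP h v e; move: (h v); rewrite e eqxx.
by move=> h; apply/forallP => v; apply/eqP; apply: h.
Qed.

Lemma slot_mom_le n (a : attribution n) r M s :
  (forall v, aj a v <= aS a v /\ ak a v <= aS a v) ->
  r <= M -> (forall v, aS a v <= M) -> slot_mom a r s <= M.
Proof.
move=> hb hr hv; case: s => [b|[u c]] //; rewrite -/(kid u c) mom_kid.
move: (hv u) (hb u); rewrite /aS /aj /ak /em; case: (nat_of_ord c) => [|[|[|e]]] /=; lia.
Qed.

Definition adm' {n} (G : pregraph n) (r : nat) (a : attribution n) : Prop :=
  [/\ (forall v, aj a v <= aS a v /\ ak a v <= aS a v),
      (forall v, slot_mom a r (par G v) = aj a v),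
      (forall s, leaf G s -> slot_mom a r (dsh G s) = slot_mom a r s)
    & (forall v, prop_holds (prop G v) (aS a v) (aj a v) (ak a v)
                  (aS a (mate G v)) (aj a (mate G v)) (ak a (mate G v)))].

Definition good {n} (G : pregraph n) (r : nat) : Prop :=
  exists f : {ffun 'I_n -> nat} -> attribution n, injective f /\
    forall x, adm' G r (f x) /\ forall v, aS (f x) v <= r + \sum_i x i.

Lemma ext_core n (G : pregraph n) (H : pregraph n.+2) moved t ends r aG xv :
  ins_common G H moved t ends -> adm' G r aG -> bnd xv ->
  (forall u, moved u -> slot_mom (ext aG xv t) r (par H (oldv u)) = aj aG u) ->
  slot_mom (ext aG xv t) r (par H nv) = xv.1.2 ->
  slot_mom (ext aG xv t) r (par H nv') = (pmate t xv).1.2 ->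
  (forall s, leaf H s -> slot_mom (ext aG xv t) r (dsh H s) = slot_mom (ext aG xv t) r s) ->
  adm' H r (ext aG xv t).
Proof.
move=> [hpar [hm1 hm2 hm3] hpr [hp1 hp2] hlead] [b1 b2 b3 b4] bx hmv hnv hnv' hd.
split => //.
- move=> w; case: (vdec w) => [[u ->]|[->|->]]; rewrite /aj /ak /aS ?ext_old ?ext_nv ?ext_nv' //.
  + exact: b1.
  + exact: (pmate_bnd t bx).
- move=> w; case: (vdec w) => [[u ->]|[->|->]]; rewrite /aj ?ext_old ?ext_nv ?ext_nv' //.
  case: (boolP (moved u)) => hu; first by rewrite hmv.
  by rewrite hpar // mom_old b2.
- move=> w; case: (vdec w) => [[u ->]|[->|->]]; rewrite /aj /ak /aS.
  + by rewrite hm1 !ext_old hpr; apply: b4.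
  + by rewrite hm2 hp1 ext_nv ext_nv'; apply: ph1.
  + by rewrite hm3 hp2 ext_nv ext_nv'; apply: ph2.
Qed.


Definition xo {n} (x : {ffun 'I_n.+2 -> nat}) : {ffun 'I_n -> nat} :=
  [ffun u => x (oldv u)].

Definition xvof {n} r (X : slot n) (a : attribution n) (x : {ffun 'I_n.+2 -> nat}) :=
  let m := slot_mom a r X in (m + x nv + x nv', m, x nv').

Lemma sum_split n (x : {ffun 'I_n.+2 -> nat}) :
  \sum_i x i = \sum_i xo x i + x nv + x nv'.
Proof.
rewrite big_ord_recr big_ord_recr /=.
congr (_ + _ + _).
- by apply: eq_bigr => i _; rewrite ffunE; congr (x _); apply: ord_inj.
- by congr (x _); apply: ord_inj; rewrite val_nv.
- by congr (x _); apply: ord_inj; rewrite val_nv'.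
Qed.

Lemma bnd_xvof n r X (a : attribution n) x : bnd (xvof r X a x).
Proof. rewrite /bnd /xvof /=; lia. Qed.

Lemma good_ext n (G : pregraph n) (H : pregraph n.+2) r
  (f : {ffun 'I_n -> nat} -> attribution n) (X : slot n) t :
  injective f -> (forall x, adm' G r (f x) /\ forall v, aS (f x) v <= r + \sum_i x i) ->
  (forall x, adm' H r (ext (f (xo x)) (xvof r X (f (xo x)) x) t)) ->
  good H r.
Proof.
move=> finj fp hH.
exists (fun x => ext (f (xo x)) (xvof r X (f (xo x)) x) t); split.
- move=> x y e.
  have e1 : f (xo x) = f (xo y).
    by apply/ffunP => u; move: (congr1 (fun a : attribution n.+2 => a (oldv u)) e); rewrite /= !ext_old.
  have e2 := finj _ _ e1.
  move: (congr1 (fun a : attribution n.+2 => a nv) e); rewrite /= !ext_nv /xvof e1 => [[ea eb]].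
  apply/ffunP => w; case: (vdec w) => [[u ->]|[->|->]].
  + by move: (congr1 (fun g : {ffun _ -> nat} => g u) e2); rewrite /= !ffunE.
  + by move: ea; rewrite eb => /addIn /addnI.
  + by [].
- move=> x; split; first exact: hH.
  have [[hb _ _ _] hs] := fp (xo x).
  move=> w; rewrite sum_split; case: (vdec w) => [[u ->]|[->|->]]; rewrite /aS ?ext_old ?ext_nv ?ext_nv' ?pmate_S /xvof /=.
  + move: (hs u); rewrite /aS => h; apply: (leq_trans h); rewrite leq_add2l -addnA; exact: leq_addr.
  + have h := slot_mom_le X hb (leq_addr _ r) hs; rewrite !addnA !leq_add2r; exact: h.
  + have h := slot_mom_le X hb (leq_addr _ r) hs; rewrite !addnA !leq_add2r; exact: h.
Qed.


Lemma em_pbE t x e e' : bnd x -> pbij t e = e' -> e < 4 -> em (pmate t x) e' = em x e.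
Proof. by move=> bx <- he; apply: em_pb. Qed.

Lemma leading3 t a a' b b' c c' : leading t [:: (a,a'); (b,b'); (c,c')] ->
  [/\ pbij t a = a', pbij t b = b' & pbij t c = c'].
Proof. by rewrite /leading /= => /and4P [/eqP ? /eqP ? /eqP ? _]. Qed.

Lemma vc1 : val c1 = 1. Proof. exact: val_c1. Qed.
Lemma vc2 : val c2 = 2. Proof. exact: val_c2. Qed.
Lemma one_nat : (1%R : nat) = 1%N. Proof. by []. Qed.
Lemma zero_nat : (0%R : nat) = 0%N. Proof. by []. Qed.

Lemma ca12 (ca : 'I_3) : ca == c1 \/ ca == c2 -> ca = c1 \/ ca = c2.
Proof. by case=> /eqP; auto. Qed.

Lemma leaf_old n (G : pregraph n) (H : pregraph n.+2) (moved : 'I_n -> bool) s0 :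
  (forall u, ~~ moved u -> par H (oldv u) = oslot (par G u)) ->
  (forall u, moved u -> exists w, par H w = oslot (par G u)) ->
  leaf H (oslot s0) -> leaf G s0.
Proof.
move=> hp hm /leafP hl; apply/leafP => u e.
case: (boolP (moved u)) => hu.
  by case: (hm u hu) => w; rewrite e; apply: hl.
by apply: (hl (oldv u)); rewrite hp // e.
Qed.

Ltac solve_em bx pb0 pb1 pb2 pb3 :=
  rewrite ?mom_kid ?ext_nv ?ext_nv' ?val_c1 ?val_c2 /=;
  first [ exact: (em_pbE bx pb0) | exact: (em_pbE bx pb1)
        | exact: (em_pbE bx pb2) | exact: (em_pbE bx pb3)
        | symmetry; exact: (em_pbE bx pb0) | symmetry; exact: (em_pbE bx pb1)
        | symmetry; exact: (em_pbE bx pb2) | symmetry; exact: (em_pbE bx pb3) ].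

Lemma good_I n (G : pregraph n) H r : good G r -> ins_I G H -> good H r.
Proof.
case=> f [finj fp] [x0 [ca [t [hl [hca [hc [hpn hpn'] hold hd0 [hd1 hd2]]]]]]].
apply: (good_ext (X:=x0) (t:=t) finj fp) => x.
have [hG _] := fp (xo x).
have bx := bnd_xvof r x0 (f (xo x)) x.
have [b1 b2 b3 b4] := hG.
have hc' := hc; case: hc' => [hpar _ _ _ /leading3 [pb1 pb2 pb3]].
have pbs := pbij_sum t.
case: (ca12 hca) => eca; subst ca; rewrite ?cother_c1 ?cother_c2 ?vc1 ?vc2 ?natn ?one_nat ?zero_nat in pb1 pb2 pb3 hd2 *.
all: have pb0 : pbij t 0 = 0 by lia.
all: apply: (ext_core hc hG bx) => //.
all: try by rewrite hpn mom_old.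
all: try by rewrite hpn' mom_old b3 //; symmetry; exact: (em_pbE bx pb0).
all: move=> s; case: (sdec s) => [[s0 ->]|[[c ->]|[c ->]]] hs.
all: try (case: (c3 c) => ->; first [rewrite (proj1 hd0) | rewrite (proj1 hd1) | rewrite (proj1 hd2)
          | rewrite (proj2 hd0) | rewrite (proj2 hd1) | rewrite (proj2 hd2)];
          solve_em bx pb0 pb1 pb2 pb3).
all: have hl0 := leaf_old hpar (fun u (h : false) => ltac:(by [])) hs.
all: rewrite hold // ?mom_old ?b3 // => e; subst s0.
all: by rewrite -?hpn -?hpn' leaf_par in hs.
Qed.

Lemma good_II n (G : pregraph n) H r : good G r -> ins_II G H -> good H r.
Proof.
case=> f [finj fp] [z [ca [t [hl [hca [hc [hpn hpn'] hold hd0 [hd1 hd2]]]]]]].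
apply: (good_ext (X:=z) (t:=t) finj fp) => x.
have [hG _] := fp (xo x).
have bx := bnd_xvof r z (f (xo x)) x.
have [b1 b2 b3 b4] := hG.
have hc' := hc; case: hc' => [hpar _ _ _ /leading3 [pb1 pb2 pb3]].
have pbs := pbij_sum t.
case: (ca12 hca) => eca; subst ca; rewrite ?cother_c1 ?cother_c2 ?vc1 ?vc2 ?natn ?one_nat ?zero_nat in pb1 pb2 pb3 hd2 *.
all: have pb0 : pbij t 0 = 1 by lia.
all: apply: (ext_core hc hG bx) => //.
all: try by rewrite hpn mom_old.
all: try by rewrite hpn'; solve_em bx pb0 pb1 pb2 pb3.
all: move=> s; case: (sdec s) => [[s0 ->]|[[c ->]|[c ->]]] hs.
all: try (case: (c3 c) hs => -> hs;
  (try by rewrite -hpn' leaf_par in hs);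
  first [rewrite (proj1 hd0) | rewrite (proj1 hd1) | rewrite (proj1 hd2)
          | rewrite (proj2 hd0) | rewrite (proj2 hd1) | rewrite (proj2 hd2)];
  rewrite ?mom_old ?b3 //; solve_em bx pb0 pb1 pb2 pb3).
all: have hl0 := leaf_old hpar (fun u (h : false) => ltac:(by [])) hs.
all: case: (eqVneq s0 (dsh G z)) => [->|hne].
all: try (rewrite (proj2 hd0) mom_old b3 //; solve_em bx pb0 pb1 pb2 pb3).
all: rewrite hold // ?mom_old ?b3 //; try exact/eqP.
all: by move=> e; subst s0; rewrite -hpn leaf_par in hs.
Qed.

Lemma good_III n (G : pregraph n) H r : good G r -> ins_III G H -> good H r.
Proof.
case=> f [finj fp] [z [ca [cx [t [hl [hca [hcx [hc [hpn hpn'] hold hd0 [hd1 hd2]]]]]]]]].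
apply: (good_ext (X:=z) (t:=t) finj fp) => x.
have [hG _] := fp (xo x).
have bx := bnd_xvof r z (f (xo x)) x.
have [b1 b2 b3 b4] := hG.
have hc' := hc; case: hc' => [hpar _ _ _ /leading3 [pb1 pb2 pb3]].
have pbs := pbij_sum t.
case: (ca12 hca) => eca; subst ca; case: (ca12 hcx) => ecx; subst cx;
  rewrite ?cother_c1 ?cother_c2 ?vc1 ?vc2 ?natn ?one_nat ?zero_nat in pb1 pb2 pb3 hpn' hd0 hd1 hd2 *.
all: have pb0 : pbij t 0 = 6 - (pbij t 1 + pbij t 2 + pbij t 3) by lia.
all: rewrite pb1 pb2 pb3 /= in pb0.
all: apply: (ext_core hc hG bx) => //.
all: try by rewrite hpn mom_old.
all: try by rewrite hpn'; solve_em bx pb0 pb1 pb2 pb3.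
all: move=> s; case: (sdec s) => [[s0 ->]|[[c ->]|[c ->]]] hs.
all: try (case: (c3 c) hs => -> hs;
  (try by rewrite -hpn' leaf_par in hs);
  first [rewrite (proj1 hd0) | rewrite (proj1 hd1) | rewrite (proj1 hd2)
          | rewrite (proj2 hd0) | rewrite (proj2 hd1) | rewrite (proj2 hd2)];
  rewrite ?mom_old ?b3 //; solve_em bx pb0 pb1 pb2 pb3).
all: have hl0 := leaf_old hpar (fun u (h : false) => ltac:(by [])) hs.
all: case: (eqVneq s0 (dsh G z)) => [->|hne].
all: try (rewrite (proj2 hd2) mom_old b3 //; solve_em bx pb0 pb1 pb2 pb3).
all: rewrite hold // ?mom_old ?b3 //; try exact/eqP.
all: by move=> e; subst s0; rewrite -hpn leaf_par in hs.
Qed.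

Lemma good_IIs n (G : pregraph n) H r : good G r -> ins_IIs G H -> good H r.
Proof.
case=> f [finj fp] [z [ca [t [hca [hc [hpn hpn'] hpz hold [hd1 hd2]]]]]].
apply: (good_ext (X:=par G z) (t:=t) finj fp) => x.
have [hG _] := fp (xo x).
have bx := bnd_xvof r (par G z) (f (xo x)) x.
have [b1 b2 b3 b4] := hG.
have hc' := hc; case: hc' => [hpar _ _ _ /leading3 [pb1 pb2 pb3]].
have pbs := pbij_sum t.
case: (ca12 hca) => eca; subst ca;
  rewrite ?cother_c1 ?cother_c2 ?vc1 ?vc2 ?natn ?one_nat ?zero_nat in pb1 pb2 pb3 hpn' hd1 hd2 *.
all: have pb0 : pbij t 0 = 6 - (pbij t 1 + pbij t 2 + pbij t 3) by lia.
all: rewrite pb1 pb2 pb3 /= in pb0.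
all: have hmv : forall u, u == z -> exists w, par H w = oslot (par G u)
       by move=> u /eqP ->; exists nv.
all: apply: (ext_core hc hG bx) => //.
all: try by rewrite hpn mom_old.
all: try by rewrite hpn'; solve_em bx pb0 pb1 pb2 pb3.
all: try by move=> u /eqP ->; rewrite hpz -b2; solve_em bx pb0 pb1 pb2 pb3.
all: move=> s; case: (sdec s) => [[s0 ->]|[[c ->]|[c ->]]] hs.
all: try (case: (c3 c) hs => -> hs;
  (try by rewrite -hpn' leaf_par in hs);
  (try by rewrite -hpz leaf_par in hs);
  first [rewrite (proj1 hd1) | rewrite (proj1 hd2)
          | rewrite (proj2 hd1) | rewrite (proj2 hd2)];
  rewrite ?mom_old ?b3 //; solve_em bx pb0 pb1 pb2 pb3).
all: have hl0 := leaf_old hpar hmv hs.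
all: by rewrite hold // ?mom_old ?b3.
Qed.

Lemma good_IIIs n (G : pregraph n) H r : good G r -> ins_IIIs G H -> good H r.
Proof.
case=> f [finj fp] [z [ca [cc [t [hca [hcc [hc [hpn hpn'] hpz hold [hd1 hd2]]]]]]]].
apply: (good_ext (X:=par G z) (t:=t) finj fp) => x.
have [hG _] := fp (xo x).
have bx := bnd_xvof r (par G z) (f (xo x)) x.
have [b1 b2 b3 b4] := hG.
have hc' := hc; case: hc' => [hpar _ _ _ /leading3 [pb1 pb2 pb3]].
have pbs := pbij_sum t.
case: (ca12 hca) => eca; subst ca; case: (ca12 hcc) => ecc; subst cc;
  rewrite ?cother_c1 ?cother_c2 ?vc1 ?vc2 ?natn ?one_nat ?zero_nat in pb1 pb2 pb3 hpn' hpz hd1 hd2 *.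
all: have pb0 : pbij t 0 = 6 - (pbij t 1 + pbij t 2 + pbij t 3) by lia.
all: rewrite pb1 pb2 pb3 /= in pb0.
all: have hmv : forall u, u == z -> exists w, par H w = oslot (par G u)
       by move=> u /eqP ->; exists nv.
all: apply: (ext_core hc hG bx) => //.
all: try by rewrite hpn mom_old.
all: try by rewrite hpn'; solve_em bx pb0 pb1 pb2 pb3.
all: try by move=> u /eqP ->; rewrite hpz -b2; solve_em bx pb0 pb1 pb2 pb3.
all: move=> s; case: (sdec s) => [[s0 ->]|[[c ->]|[c ->]]] hs.
all: try (case: (c3 c) hs => -> hs;
  (try by rewrite -hpn' leaf_par in hs);
  (try by rewrite -hpz leaf_par in hs);
  first [rewrite (proj1 hd1) | rewrite (proj1 hd2)
          | rewrite (proj2 hd1) | rewrite (proj2 hd2)];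
  rewrite ?mom_old ?b3 //; solve_em bx pb0 pb1 pb2 pb3).
all: have hl0 := leaf_old hpar hmv hs.
all: by rewrite hold // ?mom_old ?b3.
Qed.


Lemma good_triv (G : pregraph 0) r : good G r.
Proof.
exists (fun _ => [ffun v => (0, 0, 0)]); split.
  by move=> x y _; apply/ffunP => -[].
move=> x; split; [split | by case].
- by case.
- by case.
- move=> [b|[[]]] _ //; by case: (dsh G (inl b)) => [b1|[[]]].
- by case.
Qed.

Lemma sslot_mom n (a b : attribution n) (sg : {perm 'I_n}) r s :
  (forall u, b (sg u) = a u) -> slot_mom b r (sslot sg s) = slot_mom a r s.
Proof.
move=> h; case: s => [c|[u c]] //.
by rewrite /sslot -/(kid (sg u) c) -/(kid u c) !mom_kid h.
Qed.

Lemma sslotK n (sg : {perm 'I_n}) s : sslot sg (sslot (sg^-1)%g s) = s.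
Proof. by case: s => [c|[u c]] //=; rewrite permKV. Qed.

Lemma good_iso n (G H : pregraph n) (sg : {perm 'I_n}) r :
  good G r -> iso sg G H -> good H r.
Proof.
case=> f [finj fp] [hp hd hm hpr].
pose xs (x : {ffun 'I_n -> nat}) := [ffun u => x (sg u)].
pose fH x := [ffun v => f (xs x) ((sg^-1)%g v)].
have fHE x u : fH x (sg u) = f (xs x) u by rewrite ffunE permK.
exists fH; split.
- move=> x y e.
  have e1 : f (xs x) = f (xs y).
    by apply/ffunP => u; rewrite -!fHE e.
  have e2 := finj _ _ e1.
  apply/ffunP => v; rewrite -(permKV sg v).
  by move: (congr1 (fun g : {ffun _ -> nat} => g ((sg^-1)%g v)) e2); rewrite /= !ffunE.
- move=> x; have [[b1 b2 b3 b4] hs] := fp (xs x); split.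
  + split.
    * by move=> v; rewrite -(permKV sg v) /aj /ak /aS fHE; apply: b1.
    * move=> v; rewrite -(permKV sg v) hp (sslot_mom _ _ (fHE x)).
      by rewrite /aj fHE b2.
    * move=> s; rewrite -(sslotK sg s); set s0 := sslot _ s => hl.
      have hl0 : leaf G s0.
        apply/leafP => u e; move/leafP: hl => /(_ (sg u)); rewrite hp e; exact.
      by rewrite hd // !(sslot_mom _ _ (fHE x)) b3.
    * move=> v; rewrite -(permKV sg v) hm hpr /aS /aj /ak !fHE; apply: b4.
  + move=> v; rewrite -(permKV sg v) /aS fHE.
    have -> : \sum_i x i = \sum_i xs x i.
      by rewrite (reindex_inj (@perm_inj _ sg)); apply: eq_bigr => i _; rewrite ffunE.
    exact: hs.
Qed.

Lemma melonic_good n (G : pregraph n) r : melonic G -> good G r.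
Proof.
elim => {n G}.
- by move=> G _ _; apply: good_triv.
- by move=> n G H sg _ ih hi; apply: good_iso ih hi.
- by move=> n G H _ ih hi; apply: good_I ih hi.
- by move=> n G H _ ih hi; apply: good_II ih hi.
- by move=> n G H _ ih hi; apply: good_III ih hi.
- by move=> n G H _ ih hi; apply: good_IIs ih hi.
- by move=> n G H _ ih hi; apply: good_IIIs ih hi.
Qed.

Open Scope ring_scope.

Lemma card_slot n : #|slot n| = (2 + n * 3)%N.
Proof. by rewrite /slot card_sum card_bool card_prod !card_ord. Qed.

Lemma weight_lb (R : realType) n (G : pregraph n) (p : R) r a M :
  0 <= p <= 1 -> is_graph G -> adm' G r a -> (r <= M)%N -> (forall v, (aS a v <= M)%N) ->
  p ^+ ((2 * n + 1) * M) <= weight G p r a.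
Proof.
move=> /andP [p0 p1] [_ _ hg _ _] [b1 b2 b3 b4] hr hM.
set F := fun s => p ^+ slot_mom a r s.
have F0 s : 0 <= F s by rewrite /F exprn_ge0.
have F1 s : F s <= 1 by rewrite /F exprn_ile1.
have wB : \prod_(s | leaf G s && ~~ sty G s) F s = weight G p r a.
  rewrite (reindex_onto (dsh G) (dsh G)); last first.
    by move=> s /andP [hl _]; case: (hg s hl).
  apply: eq_big => s /=.
    apply/idP/idP.
    - move=> /andP [/andP [hl hs] /eqP e].
      have [hl' e' st] := hg _ hl.
      by rewrite -e hl' st hs.
    - move=> /andP [hl hs]; have [hl' e' st] := hg _ hl.
      by rewrite hl' e' st hs eqxx.
  move=> /andP [/andP [hl _] /eqP e].
  by rewrite /F -b3 // e.
have w0 : 0 <= weight G p r a by apply: prodr_ge0 => s _; apply: F0.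
have hsq : weight G p r a * weight G p r a = \prod_(s | leaf G s) F s.
  by rewrite [in RHS](bigID (fun s => sty G s)) /= wB.
have hall : \prod_s F s <= \prod_(s | leaf G s) F s.
  rewrite [in leLHS](bigID (fun s => leaf G s)) /=.
  rewrite -[leRHS]mulr1; apply: ler_wpM2l; first by apply: prodr_ge0.
  by apply: prodr_ile1 => s _; rewrite F0 F1.
have hlow : p ^+ (M * (2 + n * 3)) <= \prod_s F s.
  rewrite exprM -card_slot -prodr_const; apply: ler_prod => s _.
  rewrite exprn_ge0 //= /F; apply: ler_wiXn2l => //.
  by apply: slot_mom_le.
have hlow2 : p ^+ ((2 * n + 1) * M) ^+ 2 <= weight G p r a ^+ 2.
  rewrite (expr2 (weight G p r a)) hsq -exprM; apply: le_trans hall; apply: le_trans hlow.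
  apply: ler_wiXn2l => //; lia.
by rewrite -(@ler_pXn2r _ 2) // qualifE /= ?exprn_ge0.
Qed.

Local Open Scope ring_scope.

Lemma geom_id (R : realType) (x : R) L : (1 - x) * \sum_(j < L) x ^+ j = 1 - x ^+ L.
Proof. have := subrX1 x L => h. have -> : 1 - x ^+ L = - (x ^+ L - 1) by rewrite opprB. by rewrite h -mulNr opprB. Qed.

Lemma powL_bound (R : realType) (p : R) L : 0 <= p <= 1 ->
  p ^+ L * (L%:R * (1 - p)) <= 1.
Proof.
move=> /andP [p0 p1].
have h1 : L%:R * p ^+ L <= \sum_(j < L) p ^+ j.
  rewrite -[X in X * _]subr0 -[L in L%:R]card_ord -sumr_const.
  rewrite subr0 mulr_suml; apply: ler_sum => j _; rewrite mul1r.
  by apply: ler_wiXn2l => //; apply: ltnW.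
have := geom_id p L.
have hp : 0 <= p ^+ L by rewrite exprn_ge0.
have : 0 <= 1 - p by lra.
nra.
Qed.

Lemma exists_L (R : realType) (p : R) : 0 < p < 1 -> exists L : nat, p ^+ L <= (1 - p) / 2.
Proof.
move=> /andP [p0 p1].
have c0 : 0 < 1 - p by lra.
set x := 2 / (1 - p) ^+ 2.
have x0 : 0 <= x by rewrite /x divr_ge0 // exprn_ge0 // ltW.
exists (Num.Def.archi_bound x).
have := archi_boundP x0; set L := (Num.Def.archi_bound x)%:R => hL.
have hb := @powL_bound R p (Num.Def.archi_bound x); rewrite -/L in hb.
have hb' := hb (ltac:(apply/andP; split; lra)).
have e : x * (1 - p) ^+ 2 = 2 by rewrite /x mulfVK // expf_neq0 // gt_eqF.
have hp : 0 <= p ^+ Num.Def.archi_bound x by rewrite exprn_ge0 // ltW.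
have h2 : 2 <= L * (1 - p) ^+ 2.
  rewrite -e; apply: ler_wpM2r; [by rewrite exprn_ge0 // ltW | exact: ltW].
rewrite expr2 in h2.
nra.
Qed.

Lemma geom_upper (R : realType) (p : R) K : 0 <= p <= 1 -> (0 < K)%N ->
  1 <= \sum_(i < K) p ^+ i <= 1 + (K.-1)%:R * p.
Proof.
move=> /andP [p0 p1]; case: K => // K _; rewrite big_ord_recl expr0 /=.
apply/andP; split.
  by rewrite lerDl; apply: sumr_ge0 => i _; rewrite exprn_ge0.
have -> : K%:R * p = \sum_(i < K) p by rewrite sumr_const card_ord mulr_natl.
rewrite lerD2l.
apply: ler_sum => i _; rewrite exprS; apply: ler_piMr => //.
exact: exprn_ile1.
Qed.

Lemma key_ineq (R : realType) (p : R) K L : 0 < p < 1 -> (2 <= K)%N ->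
  p ^+ L <= (1 - p) / 2 ->
  (K%:R)^-1 <= (1 - p) * \sum_(j < L) (p ^+ K) ^+ j.
Proof.
move=> /andP [p0 p1] hK hL.
set T := \sum_(j < L) (p ^+ K) ^+ j.
set s := \sum_(i < K) p ^+ i.
have e1 : (1 - p) * s = 1 - p ^+ K by rewrite geom_id.
have e2 : (1 - p ^+ K) * T = 1 - (p ^+ K) ^+ L by rewrite geom_id.
have hqL : (p ^+ K) ^+ L <= (1 - p) / 2.
  apply: le_trans hL; rewrite -exprM; apply: ler_wiXn2l; try lra.
  by rewrite leq_pmull // (leq_trans _ hK).
have /andP [s1 hs] : 1 <= s <= 1 + (K.-1)%:R * p.
  by apply: geom_upper; [apply/andP; split; lra | apply: leq_trans hK].
have hK' : 2 <= K%:R :> R by rewrite (ler_nat R 2 K).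
have eK : K%:R = (K.-1)%:R + 1 :> R.
  by rewrite natr1 prednK // (leq_trans _ hK).
set a := (1 - p) * T.
have ea : a * s = 1 - (p ^+ K) ^+ L by rewrite /a mulrAC e1 e2.
have hKa : 1 <= K%:R * a.
  have : s <= K%:R * a * s by rewrite -mulrA ea; nra.
  move=> h; rewrite -(ler_pM2r (lt_le_trans ltr01 s1)) mul1r; exact: h.
have K0 : 0 < K%:R :> R by lra.
by rewrite -(ler_pM2l K0) mulfV ?gt_eqF.
Qed.

Open Scope classical_set_scope.

Lemma adm'_adm n (G : pregraph n) r a : adm' G r a -> admissible G r a.
Proof.
move=> [b1 b2 b3 b4]; split => // v; have := b4 v.
by rewrite /prop_holds => /andP [/eqP -> h]; split => // _; rewrite eqxx.
Qed.

Lemma esum_lb (R : realType) n (G : pregraph n) (p : R) r L :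
  0 <= p <= 1 -> is_graph G -> good G r ->
  (((p ^+ ((2 * n + 1) * r)%N) * (\sum_(j < L) (p ^+ (2 * n + 1)%N) ^+ j) ^+ n)%:E
    <= \esum_(a in [set a : attribution n | admissible G r a]) (weight G p r a)%:E)%E.
Proof.
move=> hp hG [f [finj fp]].
pose toN (b : {ffun 'I_n -> 'I_L}) : {ffun 'I_n -> nat} := [ffun i => nat_of_ord (b i)].
pose h b := f (toN b).
apply: esum_ge; exists (h @` setT).
  split; first exact: finite_image finite_finset.
  by move=> _ [b _ <-]; have [ha _] := fp (toN b); apply: adm'_adm.
rewrite fsbig_image; last first.
  move=> b1 b2 _ _ /finj e; apply/ffunP => i; apply: ord_inj.
  by move: (congr1 (fun g : {ffun _ -> nat} => g i) e); rewrite !ffunE.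
rewrite (fsbigE (enum {ffun 'I_n -> 'I_L})) ?enum_uniq //; last by move=> i _; rewrite mem_enum.
under eq_bigl do rewrite in_setT.
rewrite big_enum /= sumEFin lee_fin.
have eT : (\sum_(j < L) (p ^+ (2 * n + 1)%N) ^+ j) ^+ n =
    \prod_(i < n) \sum_(j < L) (p ^+ (2 * n + 1)%N) ^+ j by rewrite prodr_const card_ord.
rewrite eT bigA_distr_bigA /= mulr_sumr; apply: ler_sum => b _.
have [ha hb] := fp (toN b).
have hp2 := weight_lb hp hG ha (leq_addr _ r) hb.
apply: le_trans hp2.
rewrite [X in _ <= p ^+ X]mulnDr [X in _ <= X]exprD; apply: ler_wpM2l; first by case/andP: hp => ? ?; rewrite exprn_ge0.
rewrite big_distrr /= -prodrXr.
apply: ler_prod => i _; rewrite ffunE -exprM lexx andbT exprn_ge0 //; by case/andP: hp.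
Qed.

Lemma final_aux (R : realType) (p : R) (r n : nat) (G : pregraph n) :
  0 < p < 1 -> is_graph G -> melonic G ->
  (((((2 * n + 1)%N)%:R ^+ n)^-1 * p ^+ ((2 * n + 1) * r)%N)%:E
     <= amplitude G p r)%E.
Proof.
move=> /andP [p0 p1] hG hm.
have hp : 0 <= p <= 1 by rewrite !ltW.
have hgood := melonic_good r hm.
have [L hL] := exists_L (p:=p) (ltac:(by rewrite p0 p1)).
have hes := esum_lb L hp hG hgood.
rewrite /amplitude exprVn invrK.
have c0 : (0 <= ((1 - p) ^+ n)%:E)%E by rewrite lee_fin exprn_ge0 // subr_ge0 ltW.
apply: le_trans (lee_wpmul2l c0 hes).
rewrite -EFinM lee_fin.
set P := p ^+ _.
set T := \sum_(j < L) _.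
have P0 : 0 <= P by rewrite exprn_ge0 // ltW.
rewrite [leRHS]mulrCA [leLHS]mulrC; apply: ler_wpM2l => //.
rewrite -exprMn -exprVn.
have [n0|n0] := posnP n; first by rewrite n0 !expr0.
apply: lerXn2r.
- by rewrite qualifE /= invr_ge0.
- rewrite qualifE /= mulr_ge0 //; first by rewrite subr_ge0 ltW.
  by apply: sumr_ge0 => j _; rewrite exprn_ge0 // exprn_ge0 // ltW.
- apply: key_ineq => //; first by rewrite p0 p1.
  lia.
Qed.

Close Scope classical_set_scope.
Unset Implicit Arguments.
Set Strict Implicit.

Theorem lemma7 (R : realType) (p : R) (r n : nat) (G : pregraph n) :
  0 < p < 1 -> ~~ odd n -> is_graph G -> melonic G ->
  ((((2 * n + 1)%:R ^+ n)^-1 * p ^+ ((2 * n + 1) * r))%:E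
     <= amplitude G p r)%E.
Proof.
move=> hp _ hG hm; exact: final_aux hp hG hm.
Qed.
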